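(* Let $n\ge 1$. Under optimal play, the Sign Game on the star graph $S_n$ results in a draw when $n$ is even, and is won by Player 2 when $n$ is odd.
   Context: The Sign Game on a finite simple undirected graph $G$: two players, Player P and Player N, alternate turns; the player who moves first is called Player 1 and the other Player 2 (either of P, N may be Player 1). On a turn, a player chooses a vertex of $G$ not yet assigned a value and assigns it $+1$ or $-1$. The game ends when every vertex has been assigned. The score of an edge $uv$ is the product of the values of $u$ and $v$, and the score $s(G)$ of the game is the sum of the scores of all edges. Player P wins if $s(G)>0$, Player N wins if $s(G)<0$, and the game is a draw if $s(G)=0$. ''Under optimal play'' means both players play optimally, each with primary goal of winning and secondary goal of at least drawing; the result is the outcome of this finite perfect-information game under such play. The star graph $S_n$ has $n+1$ vertices: one central vertex adjacent to each of $n$ leaves, with no other edges. *)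

(* Defs.v *)
From mathcomp Require Import all_boot all_order all_algebra.
Set Implicit Arguments. Unset Strict Implicit. Unset Printing Implicit Defensive.
Import Order.TTheory GRing.Theory Num.Theory.
Local Open Scope ring_scope.

(* A finite simple graph on vertex set 'I_m is given by an adjacency
   relation [e]; we use it only when it is symmetric and irreflexive.
   A (partial) assignment is a finite function to int: 0 = unassigned,
   +1 / -1 = assigned value. *)

Definition assignment (m : nat) := {ffun 'I_m -> int}.

Definition score (m : nat) (e : rel 'I_m) (x : assignment m) : int :=
  \sum_(u < m) \sum_(v < m | e u v && (u < v)%N) x u * x v.

(* outcome code: 1 = P wins, 0 = draw, -1 = N wins *)
Definition final_result (m : nat) (e : rel 'I_m) (x : assignment m) : int :=
  sgz (score e x).

Definition assign (m : nat) (x : assignment m) (v : 'I_m) (s : int)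
  : assignment m := [ffun u => if u == v then s else x u].

Definition moves (m : nat) (x : assignment m) : seq ('I_m * int) :=
  [seq (v, s) | v <- [seq v <- enum 'I_m | x v == 0], s <- [:: 1; -1]].

(* P maximizes the outcome code, N minimizes it; since the
   outcome ordering N-win < draw < P-win encodes exactly "primary goal win,
   secondary goal draw", this is the result under optimal play.
   The fuel k only serves termination; with fuel = number of vertices the
   game always ends (each move assigns a vertex) before fuel runs out.
   Values lie in {-1,0,1}, so foldr max/min with initial -1/1 is the max/min
   over the (nonempty) list of successor values. *)
Fixpoint game_value (m : nat) (e : rel 'I_m) (k : nat) (turnP : bool)
    (x : assignment m) : int :=
  match k with
  | 0 => final_result e x
  | k'.+1 =>
    let ms := moves x in
    if ms is [::] then final_result e x else
    let vals := [seq game_value e k' (~~ turnP) (assign x p.1 p.2) | p <- ms] in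
    if turnP then foldr Num.max (-1) vals else foldr Num.min 1 vals
  end.

Inductive outcome := Draw | Player1Wins | Player2Wins.

(* Result of the Sign Game on graph e under optimal play, with
   [P_first] = true iff Player P is Player 1. *)
Definition sign_game_result (m : nat) (e : rel 'I_m) (P_first : bool) : outcome :=
  let v := game_value e m P_first [ffun => 0] in
  if v == 0 then Draw
  else if (v == 1) == P_first then Player1Wins else Player2Wins.

Definition star_rel (n : nat) : rel 'I_n.+1 :=
  fun u v => ((u == 0 :> nat) && (v != 0 :> nat)) || ((v == 0 :> nat) && (u != 0 :> nat)).
Arguments star_rel n u v : clear implicits.

(* Main.v *)
Require Import Defs.
From mathcomp Require Import all_boot all_order all_algebra.
From mathcomp Require Import zify.
Import Order.TTheory GRing.Theory Num.Theory.
Local Open Scope ring_scope.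

Definition sg (z : int) : int := if 0 < z then 1 else if z < 0 then -1 else 0.
Definition ab (z : int) : int := if z < 0 then - z else z.
Definition eps (t : bool) : int := if t then 1 else -1.
Definition bz (b : bool) : int := if b then 1 else 0.
Definition F (t : bool) (c S : int) (b : bool) : int :=
  if c == 0 then eps t * sg (ab S - bz b) else sg (c * S + eps t * bz b).

Lemma sgzE2 z : sgz z = sg z.
Proof.
rewrite /sg; case: (ltrgtP 0 z) => h.
- by rewrite gtr0_sgz.
- by rewrite ltr0_sgz.
- by rewrite -h.
Qed.

Definition cmpt (t : bool) (w a : int) := if t then w <= a else a <= w.

Ltac crush := rewrite /cmpt /F /ab /eps /bz /=; repeat (case: ifP => ?); rewrite /sg; repeat (case: ifP => ?); lia.

Lemma L_leaf t c S s b : (c == -1) || (c == 1) -> (s == 1) || (s == -1) ->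
  cmpt t (F (~~t) c (S + s) (~~b)) (F t c S b).
Proof. case: t; case: b; move=> /orP[]/eqP-> /orP[]/eqP->; crush. Qed.

Lemma L_leaf_opt t c S b : (c == -1) || (c == 1) ->
  F (~~t) c (S + eps t * c) (~~b) = F t c S b.
Proof. case: t; case: b; move=> /orP[]/eqP->; crush. Qed.

Lemma L_leaf0 t S s b : (s == 1) || (s == -1) ->
  cmpt t (F (~~t) 0 (S + s) (~~b)) (F t 0 S b).
Proof. case: t; case: b; move=> /orP[]/eqP->; crush. Qed.

Lemma L_cen t S s b : (s == 1) || (s == -1) ->
  cmpt t (F (~~t) s S b) (F t 0 S b).
Proof. case: t; case: b; move=> /orP[]/eqP->; crush. Qed.

Lemma L_cen_opt t S b :
  F (~~t) (eps t * (if S < 0 then -1 else 1)) S b = F t 0 S b.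
Proof. case: t; case: b; case hS: (S < 0); crush. Qed.

Lemma foldr_max (l : seq int) d a : d <= a -> {in l, forall y, y <= a} -> a \in l ->
  foldr Num.max d l = a.
Proof.
move=> hd hl ha; apply/eqP; rewrite eq_le; apply/andP; split.
- elim: l hl {ha} => //= y l IH hl; rewrite ge_max hl ?mem_head //= IH // => z hz.
  by rewrite hl // in_cons hz orbT.
- elim: l ha {hl} => //= y l IH; rewrite in_cons le_max => /orP[/eqP->|/IH->];
    by rewrite ?lexx ?orbT.
Qed.

Lemma foldr_min (l : seq int) d a : a <= d -> {in l, forall y, a <= y} -> a \in l ->
  foldr Num.min d l = a.
Proof.
move=> hd hl ha; apply/eqP; rewrite eq_le; apply/andP; split.
- elim: l ha {hl} => //= y l IH; rewrite in_cons ge_min => /orP[/eqP->|/IH->];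
    by rewrite ?lexx ?orbT.
- elim: l hl {ha} => //= y l IH hl; rewrite le_min hl ?mem_head //= IH // => z hz.
  by rewrite hl // in_cons hz orbT.
Qed.

Lemma F_bound t c S b : -1 <= F t c S b <= 1.
Proof. case: t; case: b; crush. Qed.
Set Implicit Arguments. Unset Strict Implicit.
Local Open Scope ring_scope.

Definition lsum n (x : assignment n.+1) : int := \sum_(i < n.+1 | i != ord0) x i.
Definition unl n (x : assignment n.+1) : nat :=
  #|[set i : 'I_n.+1 | (i != ord0) && (x i == 0)]|.
Definition una n (x : assignment n.+1) : nat := #|[set i : 'I_n.+1 | x i == 0]|.
Definition Vf n t (x : assignment n.+1) : int := F t (x ord0) (lsum x) (odd (unl x)).

Lemma score_star n (x : assignment n.+1) : score (star_rel n) x = x ord0 * lsum x.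
Proof.
rewrite /score (bigD1 ord0) //= [X in _ + X]big1 ?addr0; last first.
  move=> u hu; apply: big1 => v /andP[he hlt]; exfalso.
  move: hu he hlt; rewrite /star_rel -val_eqE /=; lia.
rewrite /lsum mulr_sumr; apply: eq_bigl => v; rewrite /star_rel -val_eqE /=; lia.
Qed.

Lemma mem_moves n (x : assignment n.+1) v s :
  ((v, s) \in moves x) = (x v == 0) && ((s == 1) || (s == -1)).
Proof.
apply/allpairsP/andP => [[[v' s'] [/= h1 h2 [-> ->]]]|[h1 h2]].
  by move: h1; rewrite mem_filter => /andP[-> _]; move: h2; rewrite !inE.
exists (v, s); split => //=; last by rewrite !inE.
by rewrite mem_filter h1 mem_enum.
Qed.

Section S.
Variable n : nat.
Implicit Types x : assignment n.+1.

Lemma una_assign x v s : x v = 0 -> s != 0 -> una (assign x v s) = (una x).-1.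
Proof.
move=> h hs; rewrite /una (cardsD1 v [set i | x i == 0]) inE h eqxx add1n /=.
congr #|pred_of_set _|; apply/setP => i; rewrite !inE ffunE.
by case: (eqVneq i v) => [->|hne]; rewrite ?eqxx ?(negbTE hs) //= hne.
Qed.

Lemma assign0_lsum x s : lsum (assign x ord0 s) = lsum x.
Proof. by apply: eq_bigr => i hi; rewrite ffunE (negbTE hi). Qed.

Lemma assign0_unl x s : unl (assign x ord0 s) = unl x.
Proof.
congr #|pred_of_set _|; apply/setP => i; rewrite !inE ffunE.
by case: (eqVneq i ord0) => [->|hne]; rewrite ?eqxx ?andbF //= hne.
Qed.

Lemma assignv_lsum x v s : v != ord0 -> x v = 0 -> lsum (assign x v s) = lsum x + s.
Proof.
move=> hv h; rewrite /lsum (bigD1 v hv) [in RHS](bigD1 v hv) ffunE eqxx /= h add0r addrC.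
congr (_ + _); apply: eq_bigr => i /andP[_ hi]; by rewrite ffunE (negbTE hi).
Qed.

Lemma assignv_unl x v s : v != ord0 -> x v = 0 -> s != 0 ->
  odd (unl (assign x v s)) = ~~ odd (unl x).
Proof.
move=> hv h hs; rewrite /unl (cardsD1 v [set i | (i != ord0) && (x i == 0)]) inE hv h eqxx.
rewrite add1n /= negbK; congr (odd #|pred_of_set _|); apply/setP => i; rewrite !inE ffunE.
by case: (eqVneq i v) => [->|hne]; rewrite ?eqxx ?(negbTE hs) ?andbF //= hne ?andbT.
Qed.

Lemma terminal t x : (forall i, x i != 0) -> final_result (star_rel n) x = Vf t x.
Proof.
move=> h; rewrite /final_result score_star sgzE2 /Vf.
have ->: unl x = 0%N.
  apply/eqP; rewrite cards_eq0; apply/eqP/setP => i; rewrite !inE (negbTE (h i)) andbF //.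
by rewrite /F (negbTE (h ord0)) /bz mulr0 addr0.
Qed.

Definition validc x := (x ord0 == -1) || (x ord0 == 0) || (x ord0 == 1).

Lemma c11 x : validc x -> x ord0 != 0 -> (x ord0 == -1) || (x ord0 == 1).
Proof. by rewrite /validc => /orP[/orP[]|] /eqP->. Qed.

Lemma step_cmp t x v s : validc x -> (v, s) \in moves x ->
  cmpt t (Vf (~~t) (assign x v s)) (Vf t x).
Proof.
move=> hc; rewrite mem_moves => /andP[/eqP hv hs]; rewrite /Vf.
have hs0 : s != 0 by move: hs => /orP[]/eqP->.
case: (eqVneq v ord0) => [ev|nv].
  subst v; rewrite ffunE eqxx assign0_lsum assign0_unl hv; exact: L_cen.
rewrite ffunE eq_sym (negbTE nv) assignv_lsum // assignv_unl //.
case: (eqVneq (x ord0) 0) => [->|hc0]; first exact: L_leaf0.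
by apply: L_leaf => //; apply: c11.
Qed.

Lemma step_opt t x : validc x -> moves x != [::] ->
  exists v s, (v, s) \in moves x /\ Vf (~~t) (assign x v s) = Vf t x.
Proof.
move=> hc hne; case: (eqVneq (x ord0) 0) => [h0|hc0].
  exists ord0, (eps t * (if lsum x < 0 then -1 else 1)); split.
    by rewrite mem_moves h0 eqxx /=; case: t; case: ifP.
  rewrite /Vf ffunE eqxx assign0_lsum assign0_unl h0; exact: L_cen_opt.
have [[v s]] : exists p, p \in moves x.
  by move: hne; case: (moves x) => [|p ms] // _; exists p; rewrite mem_head.
rewrite mem_moves => /andP[/eqP hv _].
have nv : v != ord0 by apply/eqP => ev; move: hc0; rewrite -ev hv eqxx.
have h11 := c11 hc hc0.
exists v, (eps t * x ord0); split.
  by rewrite mem_moves hv eqxx /=; move: h11; case: t => /orP[]/eqP->.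
rewrite /Vf ffunE eq_sym (negbTE nv) assignv_lsum // ?assignv_unl //.
  exact: L_leaf_opt.
by move: h11; case: t => /orP[]/eqP->.
Qed.

Lemma main k t x : validc x -> (una x <= k)%N ->
  game_value (star_rel n) k t x = Vf t x.
Proof.
elim: k t x => [|k IH] t x hc hu /=.
  apply: terminal => i; apply/negP => /eqP hi.
  have: i \in [set i | x i == 0] by rewrite inE hi.
  by move: hu; rewrite leqn0 /una cards_eq0 => /eqP ->; rewrite inE.
case E: (moves x) => [|p ms].
  apply: terminal => i; apply/negP => /eqP hi.
  by have := mem_moves x i 1; rewrite E hi eqxx.
rewrite -E.
have Hm : {in moves x, forall q, game_value (star_rel n) k (~~t) (assign x q.1 q.2)
                           = Vf (~~t) (assign x q.1 q.2)}.
  move=> [v s]; rewrite mem_moves => /andP[/eqP hv hs]; apply: IH.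
    rewrite /validc ffunE; case: ifP => _; last exact: hc; by move: hs => /orP[]/eqP->.
  rewrite una_assign //; last by move: hs => /orP[]/eqP->.
  by move: hu; case: (una x) => //= u; rewrite ltnS.
have -> : [seq game_value (star_rel n) k (~~t) (assign x p.1 p.2) | p <- moves x]
  = [seq Vf (~~t) (assign x q.1 q.2) | q <- moves x] by apply/eq_in_map.
have hne : moves x != [::] by rewrite E.
have [v [s [hm hopt]]] := step_opt t hc hne.
have hin : Vf t x \in [seq Vf (~~t) (assign x q.1 q.2) | q <- moves x].
  by rewrite -hopt; apply: (map_f (fun q : 'I_n.+1 * int => Vf (~~t) (assign x q.1 q.2)) hm).
have hb := F_bound t (x ord0) (lsum x) (odd (unl x)).
case: t Hm hm hopt hin hb => _ hm hopt hin /andP[hb1 hb2].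
  apply: foldr_max => // y /mapP[[v' s'] hq ->]; exact: (step_cmp true hc hq).
apply: foldr_min => // y /mapP[[v' s'] hq ->]; exact: (step_cmp false hc hq).
Qed.

End S.

Unset Implicit Arguments.
Theorem theorem2 (n : nat) (P_first : bool) : (1 <= n)%N ->
  sign_game_result (star_rel n) P_first =
  (if odd n then Player2Wins else Draw).
Proof.
move=> _; rewrite /sign_game_result.
set x0 : assignment n.+1 := [ffun => 0].
have hc : validc x0 by rewrite /validc ffunE eqxx orbT.
have hu : (una x0 <= n.+1)%N by rewrite (leq_trans (max_card _)) // card_ord.
rewrite (@main n n.+1 P_first x0 hc hu) /Vf ffunE.
have -> : lsum x0 = 0 by rewrite /lsum big1 // => i _; rewrite ffunE.
have -> : unl x0 = n.
  rewrite /unl; have -> : [set i | (i != ord0) && (x0 i == 0)] = [set~ ord0].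
    by apply/setP => i; rewrite !inE ffunE eqxx andbT.
  by rewrite cardsC1 card_ord.
by case: P_first; case: (odd n).
Qed.
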